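(* The ordinal space $X = [0,\omega_1)$ with the order topology is set strongly star Hurewicz, while its subspace $Y = \{\alpha + 1 : \alpha < \omega_1 \text{ is a limit ordinal}\}$ is not set strongly star Hurewicz.
   Context: For a subset $S$ of a space $X$ and a collection $\mathcal{U}$ of subsets of $X$, ${\rm St}(S,\mathcal{U}) = \bigcup\{U \in \mathcal{U}: U \cap S \neq \emptyset\}$. A space $X$ is set strongly star Hurewicz if for each nonempty $S \subset X$ and each sequence $(\mathcal{U}_n: n\in\mathbb{N})$ of collections of sets open in $X$ with $\overline{S} \subset \bigcup\mathcal{U}_n$ for all $n$, there are finite sets $F_n \subset \overline{S}$ such that each $x \in S$ lies in ${\rm St}(F_n,\mathcal{U}_n)$ for all but finitely many $n$. *)

(* Defs.v *)
From Stdlib Require Import List Arith.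

Definition countable_set {T : Type} (A : T -> Prop) : Prop :=
  exists f : T -> nat, forall x y, A x -> A y -> f x = f y -> x = y.

Definition finite_set {T : Type} (F : T -> Prop) : Prop :=
  exists l : list T, forall x, F x <-> In x l.

(* These properties characterize
   ([0,omega_1), <) up to order isomorphism. *)
Definition is_omega1 {T : Type} (lt : T -> T -> Prop) : Prop :=
  (forall x, ~ lt x x) /\
  (forall x y z, lt x y -> lt y z -> lt x z) /\
  (forall x y, lt x y \/ x = y \/ lt y x) /\
  well_founded lt /\
  ~ countable_set (fun _ : T => True) /\
  (forall x, countable_set (fun y => lt y x)).

(* Bounds: None stands for -infinity (lower) / +infinity (upper). *)
Definition lbound {T : Type} (lt : T -> T -> Prop) (a : option T) (x : T) : Prop :=
  match a with None => True | Some a => lt a x end.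
Definition ubound {T : Type} (lt : T -> T -> Prop) (b : option T) (x : T) : Prop :=
  match b with None => True | Some b => lt x b end.

Definition order_open {T : Type} (lt : T -> T -> Prop) (U : T -> Prop) : Prop :=
  forall x, U x -> exists a b : option T,
    lbound lt a x /\ ubound lt b x /\
    (forall y, lbound lt a y -> ubound lt b y -> U y).

Definition sub_open {T : Type} (opn : (T -> Prop) -> Prop) (X V : T -> Prop) : Prop :=
  exists U, opn U /\ (forall x, V x <-> U x /\ X x).

Definition sub_closure {T : Type} (opn : (T -> Prop) -> Prop) (X S : T -> Prop)
  (x : T) : Prop :=
  X x /\ forall V, sub_open opn X V -> V x -> exists y, S y /\ V y.

Definition star {T : Type} (F : T -> Prop) (Us : (T -> Prop) -> Prop) (x : T) : Prop :=
  exists V, Us V /\ (exists y, F y /\ V y) /\ V x.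

Definition set_strongly_star_Hurewicz {T : Type} (opn : (T -> Prop) -> Prop)
  (X : T -> Prop) : Prop :=
  forall S : T -> Prop,
    (forall x, S x -> X x) -> (exists x, S x) ->
    forall Us : nat -> ((T -> Prop) -> Prop),
      (forall n V, Us n V -> sub_open opn X V) ->
      (forall n x, sub_closure opn X S x -> exists V, Us n V /\ V x) ->
      exists F : nat -> (T -> Prop),
        (forall n, finite_set (F n)) /\
        (forall n x, F n x -> sub_closure opn X S x) /\
        (forall x, S x -> exists N, forall n, N <= n -> star (F n) (Us n) x).

(* a is a limit ordinal: nonzero and not a successor. *)
Definition is_limit {T : Type} (lt : T -> T -> Prop) (a : T) : Prop :=
  (exists z, lt z a) /\ (forall z, lt z a -> exists w, lt z w /\ lt w a).

Definition is_succ_of {T : Type} (lt : T -> T -> Prop) (a y : T) : Prop :=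
  lt a y /\ ~ (exists z, lt a z /\ lt z y).

Definition Y_succ_limits {T : Type} (lt : T -> T -> Prop) (y : T) : Prop :=
  exists a, is_limit lt a /\ is_succ_of lt a y.

(* Main.v *)
Require Import Defs.
From Stdlib Require Import List Arith Lia Classical ClassicalEpsilon Cantor.

Lemma my_choice {A B : Type} (R : A -> B -> Prop) :
  (forall a, exists b, R a b) -> exists f, forall a, R a (f a).
Proof.
  intro H. exists (fun a => proj1_sig (constructive_indefinite_description _ (H a))).
  intro a. exact (proj2_sig (constructive_indefinite_description _ (H a))).
Qed.

Lemma min_elem {T : Type} (lt : T -> T -> Prop) (Hwf : well_founded lt) (P : T -> Prop) :
  (exists x, P x) -> exists m, P m /\ forall y, lt y m -> ~ P y.
Proof.
  intros [x Hx]. revert Hx. induction x as [x IH] using (well_founded_ind Hwf). intro Hx.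
  destruct (classic (exists y, lt y x /\ P y)) as [[y [Hy1 Hy2]]|Hn].
  - apply (IH y); auto.
  - exists x; split; auto. intros y Hy Py; apply Hn; eauto.
Qed.

Lemma bounded_seq {T : Type} (lt : T -> T -> Prop) (H : is_omega1 lt) (s : nat -> T) :
  exists b, forall k, lt (s k) b.
Proof.
  destruct H as (Hirr & Htr & Htot & Hwf & Hunc & Hcnt).
  apply NNPP; intro Hn.
  assert (Hall : forall b, exists k, b = s k \/ lt b (s k)).
  { intro b. apply NNPP; intro H1. apply Hn. exists b. intro k.
    destruct (Htot (s k) b) as [?|[?|?]]; auto; exfalso; apply H1; exists k; auto. }
  apply Hunc.
  destruct (my_choice _ (fun k => Hcnt (s k))) as [f Hf].
  destruct (my_choice _ Hall) as [kk Hkk].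
  exists (fun b => Cantor.to_nat (kk b, if excluded_middle_informative (b = s (kk b)) then 0 else S (f (kk b) b))).
  intros x y _ _ E. apply (f_equal Cantor.of_nat) in E. rewrite !Cantor.cancel_of_to in E.
  injection E as E1 E2.
  destruct (excluded_middle_informative (x = s (kk x))) as [ex|ex];
  destruct (excluded_middle_informative (y = s (kk y))) as [ey|ey]; try discriminate.
  - rewrite ex, ey, E1. reflexivity.
  - injection E2 as E2. rewrite E1 in E2.
    destruct (Hkk x) as [?|hx]; [contradiction|]. destruct (Hkk y) as [?|hy]; [contradiction|].
    rewrite E1 in hx. apply (Hf (kk y)); auto.
Qed.

Lemma inhab {T : Type} (lt : T -> T -> Prop) (H : is_omega1 lt) : exists t : T, True.
Proof.
  destruct H as (_ & _ & _ & _ & Hunc & _).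
  apply NNPP; intro Hn. apply Hunc. exists (fun _ => 0). intros x. exfalso; apply Hn; eauto.
Qed.

Lemma succ_exists {T : Type} (lt : T -> T -> Prop) (H : is_omega1 lt) (y : T) :
  exists s, is_succ_of lt y s.
Proof.
  destruct (bounded_seq lt H (fun _ => y)) as [c Hc].
  destruct H as (Hirr & Htr & Htot & Hwf & Hunc & Hcnt).
  destruct (min_elem lt Hwf (fun z => lt y z)) as [s [Hs Hm]]; [exists c; apply (Hc 0)|].
  exists s. split; auto. intros [z [h1 h2]]. exact (Hm z h2 h1).
Qed.

Lemma limit_above {T : Type} (lt : T -> T -> Prop) (H : is_omega1 lt) (b : T) :
  exists g, is_limit lt g /\ lt b g.
Proof.
  destruct (my_choice _ (succ_exists lt H)) as [sc Hsc].
  set (bs := fun k => Nat.iter k sc b).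
  destruct (bounded_seq lt H bs) as [c Hc].
  pose proof H as H'.
  destruct H' as (Hirr & Htr & Htot & Hwf & Hunc & Hcnt).
  destruct (min_elem lt Hwf (fun g => forall k, lt (bs k) g)) as [g [Hg Hm]]; [eauto|].
  exists g. split; [|exact (Hg 0)].
  split; [exists b; exact (Hg 0)|].
  intros z Hz. specialize (Hm z Hz).
  assert (exists k, ~ lt (bs k) z) as [k Hk].
  { apply NNPP; intro Hn; apply Hm; intro k; apply NNPP; intro; apply Hn; eauto. }
  exists (bs (S k)). split; [|apply Hg].
  assert (lt (bs k) (bs (S k))) by (apply (Hsc (bs k))).
  destruct (Htot (bs k) z) as [?|[e|?]]; [contradiction| rewrite <- e; auto | eauto].
Qed.

Lemma list_bound {T : Type} (lt : T -> T -> Prop) (H : is_omega1 lt) (l : list T) :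
  exists b, forall x, In x l -> lt x b.
Proof.
  induction l as [|a l [b Hb]].
  - destruct (inhab lt H) as [t _]. exists t; simpl; tauto.
  - destruct (bounded_seq lt H (fun k => match k with 0 => a | _ => b end)) as [c Hc].
    pose proof H as H'. destruct H' as (Hirr & Htr & _).
    exists c. intros x [e|i].
    + subst; exact (Hc 0).
    + apply (Htr _ b); auto. exact (Hc 1).
Qed.

Lemma Y_not {T : Type} (lt : T -> T -> Prop) (H : is_omega1 lt) :
  ~ set_strongly_star_Hurewicz (order_open lt) (Y_succ_limits lt).
Proof.
  pose proof H as H'. destruct H' as (Hirr & Htr & Htot & Hwf & Hunc & Hcnt).
  intro HS.
  destruct (inhab lt H) as [t _].
  destruct (limit_above lt H t) as [g0 [Hg0 _]].
  destruct (succ_exists lt H g0) as [y0 Hy0].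
  specialize (HS (Y_succ_limits lt) (fun x h => h) (ex_intro _ y0 (ex_intro _ g0 (conj Hg0 Hy0)))
     (fun _ V => exists y, Y_succ_limits lt y /\ forall x, V x <-> x = y)).
  destruct HS as [F [Hfin [_ Hstar]]].
  - intros n V [y [HY HV]].
    pose proof HY as HY'. destruct HY' as [a [_ [Hay Hna]]].
    destruct (succ_exists lt H y) as [s [Hys Hns]].
    exists (fun x => lt a x /\ lt x s). split.
    + intros x [h1 h2]. exists (Some a), (Some s); simpl; auto.
    + intro x. rewrite HV. split.
      * intros ->. split; [split; auto|]. exact HY.
      * intros [[h1 h2] _]. destruct (Htot x y) as [?|[?|?]]; auto.
        -- exfalso; apply Hna; eauto.
        -- exfalso; apply Hns; eauto.
  - intros n x [HYx _]. exists (fun z => z = x). split; auto.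
    exists x; split; auto. tauto.
  - destruct (my_choice _ Hfin) as [L HL].
    destruct (my_choice _ (fun n => list_bound lt H (L n))) as [B HB].
    destruct (bounded_seq lt H B) as [c Hc].
    destruct (limit_above lt H c) as [g [Hg Hcg]].
    destruct (succ_exists lt H g) as [y Hy].
    destruct (Hstar y (ex_intro _ g (conj Hg Hy))) as [N HN].
    destruct (HN N (le_n N)) as [V [[y' [_ HV]] [[z [Fz Vz]] Vy]]].
    apply HV in Vz. apply HV in Vy. subst.
    apply (HL N) in Fz. apply (HB N) in Fz.
    apply (Hirr y'). apply (Htr _ (B N)); auto. apply (Htr _ c); auto.
    apply (Htr _ g); auto. apply Hy.
Qed.

Fixpoint pts {T : Type} (next : list T -> T) (k : nat) : list T :=
  match k with 0 => nil | S k => next (pts next k) :: pts next k end.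

Lemma pts_in {T : Type} (next : list T -> T) i j : i < j -> In (next (pts next i)) (pts next j).
Proof.
  induction j; intro h; [lia|]. simpl.
  destruct (Nat.eq_dec i j); [subst; auto|]. right; apply IHj; lia.
Qed.

Lemma pts_P {T : Type} (next : list T -> T) (C : T -> Prop) :
  (forall l, C (next l)) -> forall k y, In y (pts next k) -> C y.
Proof.
  intros HC k; induction k; simpl; [tauto|]. intros y [<-|i]; auto.
Qed.

Lemma sub_cl {T : Type} (lt : T -> T -> Prop) (S : T -> Prop) x :
  S x -> sub_closure (order_open lt) (fun _ : T => True) S x.
Proof. intro h. split; auto. intros V _ Vx; eauto. Qed.

Lemma starcompact {T : Type} (lt : T -> T -> Prop) (H : is_omega1 lt) (S : T -> Prop)
  (x0 : T) (Hx0 : S x0) (U : (T -> Prop) -> Prop)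
  (Hop : forall V, U V -> sub_open (order_open lt) (fun _ : T => True) V)
  (Hcov : forall x, sub_closure (order_open lt) (fun _ : T => True) S x -> exists V, U V /\ V x) :
  exists l, (forall y, In y l -> sub_closure (order_open lt) (fun _ : T => True) S y) /\
    forall x, sub_closure (order_open lt) (fun _ : T => True) S x -> star (fun y => In y l) U x.
Proof.
  set (C := sub_closure (order_open lt) (fun _ : T => True) S).
  pose proof H as H'. destruct H' as (Hirr & Htr & Htot & Hwf & Hunc & Hcnt).
  apply NNPP; intro Hn.
  assert (Hnx : forall l, exists x, C x /\ ((forall y, In y l -> C y) -> ~ star (fun y => In y l) U x)).
  { intro l. destruct (classic (forall y, In y l -> C y)) as [Hl|Hl].
    - apply NNPP; intro H2. apply Hn. exists l; split; auto. intros x Cx.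
      apply NNPP; intro; apply H2. exists x. split; auto.
    - exists x0. split; [apply sub_cl; auto|]. intro; contradiction. }
  destruct (my_choice _ Hnx) as [next Hnext].
  assert (HC : forall l, C (next l)) by (intro l; apply Hnext).
  set (xs := fun k => next (pts next k)).
  destruct (bounded_seq lt H xs) as [b Hb].
  set (P := fun p => forall N, exists k, N <= k /\ ~ lt p (xs k)).
  destruct (min_elem lt Hwf P) as [p [Pp Hm]].
  { exists b. intro N. exists N. split; auto. intro h. apply (Hirr b). eauto. }
  assert (K : forall a, lt a p -> exists N, forall k, N <= k -> lt a (xs k)).
  { intros a Ha. specialize (Hm a Ha). apply NNPP; intro h1. apply Hm. intro N.
    apply NNPP; intro h2. apply h1. exists N. intros k Hk. apply NNPP; intro; apply h2; eauto. }
  assert (K' : forall a c, lbound lt a p -> ubound lt c p -> exists N, forall k, N <= k ->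
      ~ lt p (xs k) -> lbound lt a (xs k) /\ ubound lt c (xs k)).
  { intros a c ha hc.
    assert (exists N, forall k, N <= k -> lbound lt a (xs k)) as [N HN].
    { destruct a as [a|]; simpl in *; [apply K; auto | exists 0; auto]. }
    exists N. intros k Hk Hle. split; auto.
    destruct c as [c|]; simpl in *; auto.
    destruct (Htot (xs k) p) as [?|[e|?]]; [eauto| rewrite e; auto | contradiction]. }
  assert (Cp : C p).
  { split; auto. intros V [U0 [HU HV]] Vp.
    apply HV in Vp. destruct Vp as [Up _].
    destruct (HU p Up) as [a [c [ha [hc hin]]]].
    destruct (K' a c ha hc) as [N HN].
    destruct (Pp N) as [k [Hk Hle]].
    destruct (HN k Hk Hle) as [h1 h2].
    assert (V (xs k)) as Vk by (apply HV; split; auto).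
    destruct (HC (pts next k)) as [_ HCk].
    apply (HCk V); auto. exists U0; split; auto. }
  destruct (Hcov p Cp) as [W [UW Wp]].
  destruct (Hop W UW) as [U0 [HU HW]].
  apply HW in Wp. destruct Wp as [Up _].
  destruct (HU p Up) as [a [c [ha [hc hin]]]].
  destruct (K' a c ha hc) as [N HN].
  destruct (Pp N) as [k1 [Hk1 Hle1]].
  destruct (Pp (Datatypes.S k1)) as [k2 [Hk2 Hle2]].
  destruct (HN k1 Hk1 Hle1) as [a1 b1].
  destruct (HN k2 ltac:(lia) Hle2) as [a2 b2].
  assert (W (xs k1)) by (apply HW; split; auto).
  assert (W (xs k2)) by (apply HW; split; auto).
  apply (proj2 (Hnext (pts next k2))).
  - apply pts_P; auto.
  - exists W. split; auto. split; auto. exists (xs k1). split; auto. apply pts_in; lia.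
Qed.

Theorem mainTheorem18 (T : Type) (lt : T -> T -> Prop) (Homega1 : is_omega1 lt) :
  set_strongly_star_Hurewicz (order_open lt) (fun _ : T => True) /\
  ~ set_strongly_star_Hurewicz (order_open lt) (Y_succ_limits lt).
Proof.
  split; [|apply Y_not; auto].
  intros S _ [x0 Hx0] Us Hopen Hcov.
  destruct (my_choice _ (fun n => starcompact lt Homega1 S x0 Hx0 (Us n) (Hopen n) (Hcov n)))
    as [L HL].
  exists (fun n y => In y (L n)). split; [|split].
  - intro n. exists (L n). tauto.
  - intros n x h. apply (proj1 (HL n)); auto.
  - intros x Sx. exists 0. intros n _. apply (proj2 (HL n)). apply sub_cl; auto.
Qed.
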